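(* Let $k$ be a field and let $A$ be a $k$-algebra with two graded algebra decompositions $A=\bigoplus_{i=0}^{\infty}A_i=\bigoplus_{i=0}^{\infty}B_i$ such that (1) $A_0=B_0=k$; (2) $A$ is generated as an algebra by $A_1$, and also by $B_1$; (3) either $A_1$ or $B_1$ is finite dimensional over $k$. Suppose that every algebra automorphism of $A$ is graded with respect to the grading $(A_i)_{i\ge0}$, i.e. $\mathrm{Aut}(A)=\mathrm{Aut}_{gr}(A)$. Then $A_i=B_i$ for all $i$.
   Context: $\mathrm{Aut}(A)$ denotes the group of $k$-algebra automorphisms of $A$, and $\mathrm{Aut}_{gr}(A)$ the subgroup of those $\phi$ with $\phi(A_i)=A_i$ for all $i$. *)

(* Defs.v *)
From HB Require Import structures.
From mathcomp Require Import all_boot all_order all_algebra.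
Set Implicit Arguments. Unset Strict Implicit. Unset Printing Implicit Defensive.
Import GRing.Theory.
Local Open Scope ring_scope.

Definition is_subspace (k : fieldType) (A : algType k) (S : A -> Prop) : Prop :=
  S 0 /\ (forall (c : k) (u v : A), S u -> S v -> S (c *: u + v)).

Definition graded_decomposition (k : fieldType) (A : algType k)
    (G : nat -> A -> Prop) : Prop :=
  [/\ forall i, is_subspace (G i),
      G 0%N 1,
      (forall i j (x y : A), G i x -> G j y -> G (i + j)%N (x * y)),
      (forall a : A, exists (n : nat) (f : nat -> A),
          (forall i, G i (f i)) /\ a = \sum_(i < n) f i) &
      (forall (n : nat) (f : nat -> A),
          (forall i, G i (f i)) -> \sum_(i < n) f i = 0 ->
          forall i, (i < n)%N -> f i = 0)].

Definition is_base_field (k : fieldType) (A : algType k) (S : A -> Prop) : Prop :=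
  forall a : A, S a <-> exists c : k, a = c%:A.

Definition generates (k : fieldType) (A : algType k) (S : A -> Prop) : Prop :=
  forall P : A -> Prop,
    P 1 -> (forall (c : k) (u v : A), P u -> P v -> P (c *: u + v)) ->
    (forall u v : A, P u -> P v -> P (u * v)) ->
    (forall x, S x -> P x) ->
    forall a : A, P a.

Definition finite_dim (k : fieldType) (A : algType k) (S : A -> Prop) : Prop :=
  exists (n : nat) (v : 'I_n -> A),
    forall a : A, S a <-> exists c : 'I_n -> k, a = \sum_(i < n) c i *: v i.

Definition is_alg_aut (k : fieldType) (A : algType k) (phi : A -> A) : Prop :=
  [/\ forall u v : A, phi (u + v) = phi u + phi v,
      forall (c : k) (u : A), phi (c *: u) = c *: phi u,
      forall u v : A, phi (u * v) = phi u * phi v,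
      phi 1 = 1 &
      bijective phi].

Definition is_graded_map (k : fieldType) (A : algType k)
    (G : nat -> A -> Prop) (phi : A -> A) : Prop :=
  forall i, (forall x, G i x -> G i (phi x)) /\
            (forall y, G i y -> exists x, G i x /\ phi x = y).

(* Main.v *)
Require Import Defs.
From HB Require Import structures.
From mathcomp Require Import all_boot all_order all_algebra.
From Stdlib Require Import IndefiniteDescription Classical.
From mathcomp Require Import zify.
Set Implicit Arguments. Unset Strict Implicit. Unset Printing Implicit Defensive.
Import GRing.Theory.
Local Open Scope ring_scope.

Lemma sum_trunc (V : nmodType) (F : nat -> V) m M :
  (forall i, (m <= i)%N -> F i = 0) -> (m <= M)%N ->
  \sum_(i < M) F i = \sum_(i < m) F i.
Proof.
move=> HF hmM; rewrite (big_ord_widen _ _ hmM) [RHS]big_mkcond /=.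
by apply: eq_bigr => i _; case: ltnP => // /HF ->.
Qed.

Lemma sum_pad (V : nmodType) (F : nat -> V) n m : (n <= m)%N ->
  \sum_(i < m) (if (i < n)%N then F i else 0) = \sum_(i < n) F i.
Proof. by move=> h; rewrite [RHS](big_ord_widen _ _ h) [RHS]big_mkcond. Qed.

Section Graded.
Variables (k : fieldType) (A : algType k) (G : nat -> A -> Prop).
Hypothesis HG : graded_decomposition G.

Lemma G_lin i c u v : G i u -> G i v -> G i (c *: u + v).
Proof. by case: HG => /(_ i) [_ H] _ _ _ _; apply: H. Qed.
Lemma G_0 i : G i 0.
Proof. by case: HG => /(_ i) [] . Qed.
Lemma G_add i u v : G i u -> G i v -> G i (u + v).
Proof. by move=> hu hv; have := G_lin 1 hu hv; rewrite scale1r. Qed.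
Lemma G_scale i c u : G i u -> G i (c *: u).
Proof. by move=> hu; have := G_lin c hu (G_0 i); rewrite addr0. Qed.
Lemma G_1 : G 0 1. Proof. by case: HG. Qed.
Lemma G_mul i j x y : G i x -> G j y -> G (i + j)%N (x * y).
Proof. by case: HG => _ _ H _ _; apply: H. Qed.
Lemma G_sum i (I : Type) (r : seq I) (P : pred I) F :
  (forall j, P j -> G i (F j)) -> G i (\sum_(j <- r | P j) F j).
Proof. by move=> H; apply: big_ind => //; [apply: G_0 | apply: G_add]. Qed.

Definition ex_dec (a : A) :
  {n : nat & {f : nat -> A | (forall i, G i (f i)) /\ a = \sum_(i < n) f i}}.
Proof.
have [n Hn] := constructive_indefinite_description _
   (match HG with And5 _ _ _ H _ => H a end).
exists n; exact: constructive_indefinite_description _ Hn.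
Defined.

Definition comp (i : nat) (a : A) : A :=
  let: existT n s := ex_dec a in if (i < n)%N then proj1_sig s i else 0.

Lemma comp_unique n f a : (forall i, G i (f i)) -> a = \sum_(i < n) f i ->
  forall i, comp i a = if (i < n)%N then f i else 0.
Proof.
move=> Hf Ha; rewrite /comp; case: (ex_dec a) => m [g [Hg Ha']] /= i.
set M := maxn n m.
pose h i := (if (i < n)%N then f i else 0) - (if (i < m)%N then g i else 0).
have Hh j : G j (h j).
  rewrite /h; apply: G_add; first by case: ifP => _; [apply: Hf|apply: G_0].
  rewrite -scaleN1r; apply: G_scale; by case: ifP => _; [apply: Hg|apply: G_0].
have Hs : \sum_(j < M) h j = 0.
  rewrite /h sumrB !sum_pad ?leq_maxl ?leq_maxr //.
  by rewrite -Ha -Ha' subrr.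
case: HG => _ _ _ _ Hu; have := Hu M h Hh Hs i.
case: (ltnP i M) => [iM /(_ isT)|iM _].
  by rewrite /h => /eqP; rewrite subr_eq0 => /eqP.
have -> : (i < n)%N = false by apply/negbTE; rewrite -leqNgt (leq_trans (leq_maxl _ _) iM).
have -> : (i < m)%N = false by apply/negbTE; rewrite -leqNgt (leq_trans (leq_maxr _ _) iM).
by [].
Qed.

Lemma comp_G i a : G i (comp i a).
Proof.
rewrite /comp; case: (ex_dec a) => n [f [Hf _]] /=.
by case: ifP => _; [apply: Hf|apply: G_0].
Qed.

Lemma comp_bound a : exists n, forall i, (n <= i)%N -> comp i a = 0.
Proof.
rewrite /comp; case: (ex_dec a) => n [f [Hf _]] /=.
by exists n => i hi; rewrite ltnNge hi.
Qed.

Lemma comp_decomp a m : (forall i, (m <= i)%N -> comp i a = 0) ->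
  a = \sum_(i < m) comp i a.
Proof.
move=> Hm.
have [n [f [Hf Ha]]] : exists n f, (forall i, G i (f i)) /\ a = \sum_(i < n) f i.
  by case: HG => _ _ _ H _; apply: H.
have Hc := comp_unique Hf Ha.
rewrite -(@sum_trunc _ (fun i => comp i a) m (maxn n m)) ?leq_maxr //.
rewrite (eq_bigr (fun i : 'I_(maxn n m) => if (i < n)%N then f i else 0)).
  by rewrite sum_pad ?leq_maxl.
by move=> i _; rewrite Hc.
Qed.

Lemma comp_homog j x i : G j x -> comp i x = if i == j then x else 0.
Proof.
move=> Hx.
have Hf : forall i, G i (if i == j then x else 0).
  by move=> l; case: eqP => [->|_] //; apply: G_0.
have Hs : x = \sum_(l < j.+1) (fun l : nat => if l == j then x else 0) l.
  rewrite big_ord_recr /= eqxx big1 ?add0r // => l _.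
  by rewrite ifN // neq_ltn ltn_ord.
rewrite (comp_unique Hf Hs); case: ltnP => // hi.
by rewrite ifN // gtn_eqF.
Qed.

Lemma comp_lin i c u v : comp i (c *: u + v) = c *: comp i u + comp i v.
Proof.
have [n1 H1] := comp_bound u; have [n2 H2] := comp_bound v.
set n := maxn n1 n2.
have Hf : forall i, G i (c *: comp i u + comp i v).
  by move=> l; apply: G_lin; apply: comp_G.
have Hs : c *: u + v = \sum_(l < n) (c *: comp l u + comp l v).
  rewrite big_split /= -scaler_sumr.
  rewrite -(comp_decomp (m := n) (a := u)) -?(comp_decomp (m := n) (a := v)) //.
    by move=> l hl; apply: H2; apply: leq_trans hl; apply: leq_maxr.
  by move=> l hl; apply: H1; apply: leq_trans hl; apply: leq_maxl.
rewrite (comp_unique Hf Hs); case: ltnP => // hi.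
rewrite H1 ?H2 ?scaler0 ?addr0 //; apply: leq_trans hi; [apply: leq_maxr|apply: leq_maxl].
Qed.

Lemma comp0 i : comp i 0 = 0.
Proof. by rewrite (comp_homog _ (G_0 0)); case: ifP. Qed.
Lemma compD i u v : comp i (u + v) = comp i u + comp i v.
Proof. by rewrite -{1}[u]scale1r comp_lin scale1r. Qed.
Lemma compZ i c u : comp i (c *: u) = c *: comp i u.
Proof. by rewrite -[c *: u]addr0 comp_lin comp0 addr0. Qed.
Lemma compN i u : comp i (- u) = - comp i u.
Proof. by rewrite -scaleN1r compZ scaleN1r. Qed.
Lemma compB i u v : comp i (u - v) = comp i u - comp i v.
Proof. by rewrite compD compN. Qed.
Lemma comp_sum i (I : Type) (r : seq I) (P : pred I) F :
  comp i (\sum_(j <- r | P j) F j) = \sum_(j <- r | P j) comp i (F j).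
Proof. by apply: (big_morph _ (compD i) (comp0 i)). Qed.


Definition ltd n a := forall i, (n <= i)%N -> comp i a = 0.
Definition ged n a := forall i, (i < n)%N -> comp i a = 0.

Lemma ltd_decomp n a : ltd n a -> a = \sum_(i < n) comp i a.
Proof. exact: comp_decomp. Qed.

Lemma ltd_ex a : exists n, ltd n a.
Proof. exact: comp_bound. Qed.

Lemma ltd_lin n c u v : ltd n u -> ltd n v -> ltd n (c *: u + v).
Proof. by move=> hu hv i hi; rewrite comp_lin hu ?hv ?scaler0 ?addr0. Qed.
Lemma ged_lin n c u v : ged n u -> ged n v -> ged n (c *: u + v).
Proof. by move=> hu hv i hi; rewrite comp_lin hu ?hv ?scaler0 ?addr0. Qed.
Lemma ltd0 n : ltd n 0. Proof. by move=> i _; rewrite comp0. Qed.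
Lemma ged0 n : ged n 0. Proof. by move=> i _; rewrite comp0. Qed.
Lemma ltdD n u v : ltd n u -> ltd n v -> ltd n (u + v).
Proof. by move=> hu hv; rewrite -[u]scale1r; apply: ltd_lin. Qed.
Lemma gedD n u v : ged n u -> ged n v -> ged n (u + v).
Proof. by move=> hu hv; rewrite -[u]scale1r; apply: ged_lin. Qed.
Lemma ltdZ n c u : ltd n u -> ltd n (c *: u).
Proof. by move=> hu; rewrite -[_ *: _]addr0; apply: ltd_lin => //; apply: ltd0. Qed.
Lemma gedZ n c u : ged n u -> ged n (c *: u).
Proof. by move=> hu; rewrite -[_ *: _]addr0; apply: ged_lin => //; apply: ged0. Qed.
Lemma ltdN n u : ltd n u -> ltd n (- u).
Proof. by move=> hu; rewrite -scaleN1r; apply: ltdZ. Qed.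
Lemma gedN n u : ged n u -> ged n (- u).
Proof. by move=> hu; rewrite -scaleN1r; apply: gedZ. Qed.
Lemma ltdB n u v : ltd n u -> ltd n v -> ltd n (u - v).
Proof. by move=> hu hv; apply: ltdD => //; apply: ltdN. Qed.
Lemma gedB n u v : ged n u -> ged n v -> ged n (u - v).
Proof. by move=> hu hv; apply: gedD => //; apply: gedN. Qed.
Lemma ltd_sum n (I : Type) (r : seq I) (P : pred I) F :
  (forall j, P j -> ltd n (F j)) -> ltd n (\sum_(j <- r | P j) F j).
Proof. by move=> H; apply: big_ind => //; [apply: ltd0 | apply: ltdD]. Qed.
Lemma ged_sum n (I : Type) (r : seq I) (P : pred I) F :
  (forall j, P j -> ged n (F j)) -> ged n (\sum_(j <- r | P j) F j).
Proof. by move=> H; apply: big_ind => //; [apply: ged0 | apply: gedD]. Qed.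
Lemma ltd_mono n m a : (n <= m)%N -> ltd n a -> ltd m a.
Proof. by move=> h H i hi; apply: H; apply: leq_trans hi. Qed.
Lemma ged_mono n m a : (m <= n)%N -> ged n a -> ged m a.
Proof. by move=> h H i hi; apply: H; apply: leq_trans h. Qed.
Lemma ged_0 a : ged 0 a. Proof. by []. Qed.
Lemma ltd_0 a : ltd 0 a -> a = 0.
Proof. by move/ltd_decomp; rewrite big_ord0. Qed.
Lemma G_ltd j x : G j x -> ltd j.+1 x.
Proof. by move=> hx i hi; rewrite (comp_homog i hx) ifN // gtn_eqF. Qed.
Lemma G_ged j x : G j x -> ged j x.
Proof. by move=> hx i hi; rewrite (comp_homog i hx) ifN // ltn_eqF. Qed.
Lemma comp_ltd i a : ltd i.+1 (comp i a).
Proof. exact: G_ltd (comp_G i a). Qed.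
Lemma comp_ged i a : ged i (comp i a).
Proof. exact: G_ged (comp_G i a). Qed.
Lemma comp_id j x : G j x -> comp j x = x.
Proof. by move=> hx; rewrite (comp_homog j hx) eqxx. Qed.

Lemma comp_mul M a b l : ltd M a -> ltd M b ->
  comp l (a * b) = \sum_(i < M) \sum_(j < M)
     (if l == (i + j)%N then comp i a * comp j b else 0).
Proof.
move=> ha hb; rewrite {1}(ltd_decomp ha) {1}(ltd_decomp hb) mulr_suml comp_sum.
apply: eq_bigr => i _; rewrite mulr_sumr comp_sum; apply: eq_bigr => j _.
by rewrite (comp_homog l (G_mul (comp_G i a) (comp_G j b))).
Qed.

Lemma ltd_mul n m a b : ltd n a -> ltd m b -> ltd (n + m).-1 (a * b).
Proof.
move=> ha hb l hl; have hA := ltd_mono (leq_addr m n) ha.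
have hB := ltd_mono (leq_addl n m) hb.
rewrite (comp_mul l hA hB); apply: big1 => i _; apply: big1 => j _.
case: eqP => // ->{l} in hl *.
case: (ltnP i n) => hi; last by rewrite ha ?mul0r.
case: (ltnP j m) => hj; last by rewrite hb ?mulr0.
exfalso; move: hl hi hj; move: (nat_of_ord i) (nat_of_ord j) => i' j'; clear; lia.
Qed.

Lemma ged_mul n m a b : ged n a -> ged m b -> ged (n + m) (a * b).
Proof.
move=> ha hb l hl; have [M hM] := ltd_ex a; have [M' hM'] := ltd_ex b.
have hA := ltd_mono (leq_maxl M M') hM; have hB := ltd_mono (leq_maxr M M') hM'.
rewrite (comp_mul l hA hB); apply: big1 => i _; apply: big1 => j _.
case: eqP => // ->{l} in hl *.
case: (ltnP i n) => hi; first by rewrite ha ?mul0r.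
case: (ltnP j m) => hj; first by rewrite hb ?mulr0.
by exfalso; move: hl; rewrite ltnNge leq_add.
Qed.

Lemma comp_mul_ged n m a b : ged n a -> ged m b ->
  comp (n + m) (a * b) = comp n a * comp m b.
Proof.
move=> ha hb.
have ea : a = comp n a + (a - comp n a) by rewrite addrC subrK.
have eb : b = comp m b + (b - comp m b) by rewrite addrC subrK.
have ra : ged n.+1 (a - comp n a).
  move=> i; rewrite ltnS leq_eqVlt => /orP [/eqP ->|hi].
    by rewrite compB (comp_id (comp_G n a)) subrr.
  by rewrite compB ha // (comp_homog i (comp_G n a)) ifN ?subrr // ltn_eqF.
have rb : ged m.+1 (b - comp m b).
  move=> i; rewrite ltnS leq_eqVlt => /orP [/eqP ->|hi].
    by rewrite compB (comp_id (comp_G m b)) subrr.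
  by rewrite compB hb // (comp_homog i (comp_G m b)) ifN ?subrr // ltn_eqF.
move: ea eb ra rb; set a2 := a - comp n a; set b2 := b - comp m b => ea eb ra rb; clearbody a2 b2.
rewrite {1}ea {1}eb mulrDl !mulrDr !compD.
rewrite comp_id; last by apply: G_mul; apply: comp_G.
rewrite (ged_mul (@comp_ged n a) rb) ?addnS //.
rewrite (ged_mul ra (@comp_ged m b)) ?addSn //.
rewrite (ged_mul ra rb) ?addSn ?addnS ?ltnS 1?ltnW //.
by rewrite !addr0.
Qed.

Lemma base_G (HB : is_base_field (G 0)) (c : k) : G 0 (c%:A).
Proof. by apply/HB; exists c. Qed.

End Graded.

Section Span.
Variables (k : fieldType) (A : algType k).

Definition spanQ (Q : A -> Prop) (a : A) := exists s : seq (k * A),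
  (forall p, p \in s -> Q p.2) /\ a = \sum_(p <- s) p.1 *: p.2.

Lemma spanQ_gen (S Q : A -> Prop) : generates S -> Q 1 ->
  (forall x y, Q x -> Q y -> Q (x * y)) -> (forall x, S x -> spanQ Q x) ->
  forall a, spanQ Q a.
Proof.
move=> gen Q1 Qm HS; apply: gen => //.
- exists [:: (1, 1)]; split; first by move=> p; rewrite inE => /eqP ->.
  by rewrite big_cons big_nil scale1r addr0.
- move=> c u v [su [Hsu ->]] [sv [Hsv ->]].
  exists ([seq (c * p.1, p.2) | p <- su] ++ sv); split.
    move=> p; rewrite mem_cat => /orP [/mapP [q qin ->]|pin].
      exact: (Hsu q qin).
    exact: (Hsv p pin).
  rewrite big_cat big_map /= scaler_sumr; congr (_ + _).
  by apply: eq_bigr => p _; rewrite scalerA.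
- move=> u v [su [Hsu ->]] [sv [Hsv ->]].
  exists [seq (p.1 * q.1, p.2 * q.2) | p <- su, q <- sv]; split.
    move=> r /allpairsP [[p q] [pin qin ->]] /=; apply: Qm; [exact: Hsu|exact: Hsv].
  rewrite big_allpairs_dep /= mulr_suml; apply: eq_bigr => p _.
  rewrite -scalerAl mulr_sumr scaler_sumr; apply: eq_bigr => q _.
  by rewrite -scalerAr scalerA.
Qed.

End Span.

Section Two.
Variables (k : fieldType) (A : algType k) (G H : nat -> A -> Prop).
Hypotheses (HG : graded_decomposition G) (HH : graded_decomposition H).
Hypotheses (bG : is_base_field (G 0)) (bH : is_base_field (H 0)).
Hypothesis gG : generates (G 1).

Lemma split_S n a : exists a1 a2, ltd HG n a1 /\ ged HH n a2 /\ a = a1 + a2.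
Proof.
pose Q z := exists j, ltd HG j.+1 z /\ ged HH j z.
have : spanQ Q a.
  apply: (spanQ_gen gG).
  - by exists 0%N; split; [apply: G_ltd; apply: G_1|].
  - move=> x y [j [h1 h2]] [j' [h1' h2']]; exists (j + j')%N; split.
      by have := ltd_mul h1 h1'; rewrite addSn addnS.
    exact: ged_mul h2 h2'.
  - move=> x hx; set c := comp HH 0 x.
    have hc0 : H 0 c by apply: comp_G.
    have [e he] := (bH c).1 hc0.
    have gc : G 0 c by rewrite he; apply: base_G.
    exists [:: (1, c); (1, x - c)]; split.
      move=> p; rewrite !inE => /orP [] /eqP -> /=.
        by exists 0%N; split; [apply: G_ltd|].
      exists 1%N; split.
        apply: ltdB; first by apply: G_ltd.
        by apply: (ltd_mono (n := 1)) => //; apply: G_ltd.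
      move=> i; rewrite ltnS leqn0 => /eqP ->.
      by rewrite compB (comp_id HH hc0) subrr.
    by rewrite !big_cons big_nil /= !scale1r addr0 addrC subrK.
case=> s [Hs ->]; elim: s Hs => [|[c z] s IH] Hs.
  by exists 0, 0; rewrite big_nil addr0; split; [apply: ltd0|split; [apply: ged0|]].
rewrite big_cons /=.
have [a1 [a2 [h1 [h2 ->]]]] : exists a1 a2, ltd HG n a1 /\ ged HH n a2 /\
    \sum_(p <- s) p.1 *: p.2 = a1 + a2.
  by apply: IH => p hp; apply: Hs; rewrite inE hp orbT.
have [j [hz1 hz2]] : Q z by apply: (Hs (c, z)); rewrite inE eqxx.
case: (ltnP j n) => hj.
  exists (c *: z + a1), a2; split; last by split => //; rewrite addrA.
  by apply: ltd_lin => //; apply: ltd_mono hz1.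
exists a1, (c *: z + a2); split => //; split; last by rewrite addrCA.
by apply: ged_lin => //; apply: ged_mono hz2.
Qed.

End Two.

Section FinDim.
Variables (k : fieldType) (A : algType k).

Definition spans N (w : 'I_N -> A) (V : A -> Prop) :=
  forall a, V a <-> exists e : 'I_N -> k, a = \sum_(i < N) e i *: w i.

Lemma min_exists (P : nat -> Prop) N : P N ->
  exists M, P M /\ forall M', (M' < M)%N -> ~ P M'.
Proof.
elim/ltn_ind: N => N IH PN.
case: (classic (exists M', (M' < N)%N /\ P M')) => [[M' [lt PM']]|no].
  exact: IH lt PM'.
by exists N; split => // M' lt PM'; apply: no; exists M'.
Qed.

Lemma minimal_indep M (u : 'I_M -> A) V : spans u V ->
  (forall M', (M' < M)%N -> forall u' : 'I_M' -> A, ~ spans u' V) ->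
  forall e : 'I_M -> k, \sum_(i < M) e i *: u i = 0 -> forall i, e i = 0.
Proof.
move=> sp mini e he j; apply: NNPP => nz.
have nz' : e j != 0 by apply/eqP.
have lt : (M.-1 < M)%N by rewrite ltn_predL; apply: leq_ltn_trans (ltn_ord j).
apply: (mini M.-1 lt (fun i => u (lift j i))) => a; split.
  move=> /sp [f ->].
  pose g i := f i - f j / e j * e i.
  have gj : g j = 0 by rewrite /g divfK // subrr.
  have eqs : \sum_(i < M) f i *: u i = \sum_(i < M) g i *: u i.
    rewrite [RHS](eq_bigr (fun i => f i *: u i - (f j / e j) *: (e i *: u i))).
      by rewrite sumrB -scaler_sumr he scaler0 subr0.
    by move=> i _; rewrite scalerBl scalerA.
  exists (fun i => g (lift j i)); rewrite eqs (bigD1_ord j) //= gj scale0r add0r.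
  by [].
move=> [g' ->]; apply/sp.
exists (fun i => if unlift j i is Some i' then g' i' else 0).
rewrite (bigD1_ord j) //= unlift_none scale0r add0r.
by apply: eq_bigr => i _; rewrite liftK.
Qed.

Lemma FDinj N (w : 'I_N -> A) (V : A -> Prop) (h : A -> A) :
  spans w V ->
  (forall u v, h (u + v) = h u + h v) -> (forall (c : k) u, h (c *: u) = c *: h u) ->
  (forall a, V a -> V (h a)) -> (forall a, V a -> exists b, V b /\ h b = a) ->
  forall a, V a -> h a = 0 -> a = 0.
Proof.
move=> spw hD hZ hV hS.
have h0 : h 0 = 0 by apply: (addrI (h 0)); rewrite -hD !addr0.
have hsum M (e : 'I_M -> k) (u : 'I_M -> A) :
    h (\sum_(i < M) e i *: u i) = \sum_(i < M) e i *: h (u i).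
  rewrite (big_morph h hD h0); apply: eq_bigr => i _; exact: hZ.
have [M [[u spu] mini]] := min_exists (P := fun M => exists u : 'I_M -> A, spans u V)
  (ex_intro _ w spw).
have mini' : forall M', (M' < M)%N -> forall u' : 'I_M' -> A, ~ spans u' V.
  by move=> M' lt u' sp; apply: (mini M' lt); exists u'.
have sph : spans (fun i => h (u i)) V.
  move=> a; split.
    move=> /hS [b [/spu [e ->] <-]]; exists e; exact: hsum.
  by move=> [e ->]; rewrite -hsum; apply: hV; apply/spu; exists e.
move=> a /spu [e ->]; rewrite hsum => he.
have e0 := minimal_indep sph mini' he.
by apply: big1 => i _; rewrite e0 scale0r.
Qed.

End FinDim.

Lemma seq_to_ord (k : fieldType) (A : algType k) (L : seq A) (s : seq (k * A)) :
  (forall p, p \in s -> p.2 = 0 \/ p.2 \in L) ->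
  exists e : 'I_(size L) -> k,
    \sum_(p <- s) p.1 *: p.2 = \sum_(i < size L) e i *: L`_i.
Proof.
elim: s => [|[c z] s IH] Hs.
  by exists (fun _ => 0); rewrite big_nil big1 // => i _; rewrite scale0r.
have [e he] : exists e : 'I_(size L) -> k,
    \sum_(p <- s) p.1 *: p.2 = \sum_(i < size L) e i *: L`_i.
  by apply: IH => p hp; apply: Hs; rewrite inE hp orbT.
rewrite big_cons /= he.
have [->|zL] : z = 0 \/ z \in L by apply: (Hs (c, z)); rewrite inE eqxx.
  by exists e; rewrite scaler0 add0r.
pose j0 : 'I_(size L) := Ordinal (etrans (index_mem z L) zL).
exists (fun i => e i + (if i == j0 then c else 0)).
rewrite [RHS](eq_bigr (fun i => e i *: L`_i + (if i == j0 then c else 0) *: L`_i)); last first.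
  by move=> i _; rewrite scalerDl.
rewrite big_split /= addrC; congr (_ + _).
rewrite (bigD1 j0) //= eqxx big1 ?addr0 /=; first by rewrite nth_index.
by move=> i /negbTE ->; rewrite scale0r.
Qed.

Section Words.
Variables (k : fieldType) (A : algType k) (G : nat -> A -> Prop).
Hypotheses (HG : graded_decomposition G) (gG : generates (G 1)).
Variables (d : nat) (v : 'I_d -> A).
Hypothesis Hv : forall a : A, G 1 a <-> exists c : 'I_d -> k, a = \sum_(i < d) c i *: v i.

Definition word (ws : seq 'I_d) : A := \prod_(i <- ws) v i.

Lemma word_G ws : G (size ws) (word ws).
Proof.
rewrite /word; elim: ws => [|i ws IH]; first by rewrite big_nil; apply: G_1.
rewrite big_cons /=; apply: (G_mul HG (i := 1)) => //.
by apply/Hv; exists (fun j => if j == i then 1 else 0);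
   rewrite (bigD1 i) //= eqxx scale1r big1 ?addr0 // => j /negbTE ->; rewrite scale0r.
Qed.

Fixpoint words (n : nat) : seq (seq 'I_d) :=
  if n is n'.+1 then [::] :: [seq i :: w | i <- enum 'I_d, w <- words n'] else [::].

Lemma words_size n w : w \in words n -> (size w < n)%N.
Proof.
elim: n w => [|n IH] w //=; rewrite inE => /orP [/eqP -> //|].
by move=> /allpairsP [[i w'] [_ hw' ->]] /=; rewrite ltnS; apply: IH.
Qed.

Lemma words_mem n w : (size w < n)%N -> w \in words n.
Proof.
elim: n w => [|n IH] [|i w] //= hs; rewrite inE ?eqxx //.
apply/orP; right; apply: allpairs_f; first by rewrite mem_enum.
by apply: IH.
Qed.

Lemma span_words a : spanQ (fun z => exists ws, z = word ws) a.
Proof.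
apply: (spanQ_gen gG).
- by exists [::]; rewrite /word big_nil.
- by move=> x y [w1 ->] [w2 ->]; exists (w1 ++ w2); rewrite /word big_cat.
- move=> x /Hv [c ->]; exists [seq (c i, v i) | i <- index_enum 'I_d]; split.
    move=> p /mapP [i _ ->] /=; exists [:: i]; by rewrite /word big_cons big_nil mulr1.
  by rewrite big_map.
Qed.

Lemma ltd_fin n : exists N (w : 'I_N -> A), spans w (ltd HG n).
Proof.
set L := [seq word w | w <- words n].
exists (size L), (fun i => L`_i) => a; split; last first.
  move=> [e ->]; apply: ltd_sum => i _; apply: ltdZ.
  have : L`_i \in L by apply: mem_nth.
  move=> /mapP [w hw ->]; apply: (ltd_mono (n := (size w).+1)).
    exact: words_size.
  exact: G_ltd (word_G w).
move=> ha; have [s [Hs Ha]] := span_words a.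
have [|e he] := @seq_to_ord _ _ L [seq (p.1, \sum_(m < n) comp HG m p.2) | p <- s].
  move=> q /mapP [p hp ->] /=; have [ws hws] := Hs p hp; rewrite hws.
  case: (ltnP (size ws) n) => hsz.
    right; rewrite -ltd_decomp; first by apply: map_f; apply: words_mem.
    by apply: (ltd_mono (n := (size ws).+1)) => //; apply: G_ltd; apply: word_G.
  left; apply: big1 => m _; apply: (G_ged HG (word_G ws)).
  by apply: leq_trans hsz.
exists e; rewrite -he big_map /= (ltd_decomp ha) Ha.
rewrite (eq_bigr (fun i : 'I_n => \sum_(p <- s) p.1 *: comp HG i p.2)); last first.
  by move=> i _; rewrite comp_sum; apply: eq_bigr => p _; rewrite compZ.
rewrite exchange_big /=; apply: eq_bigr => p _.
by rewrite scaler_sumr.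
Qed.
End Words.

Section Two2.
Variables (k : fieldType) (A : algType k) (G H : nat -> A -> Prop).
Hypotheses (HG : graded_decomposition G) (HH : graded_decomposition H).
Hypotheses (bG : is_base_field (G 0)) (bH : is_base_field (H 0)).
Hypotheses (gG : generates (G 1)) (gH : generates (H 1)).

Lemma fin_transfer : finite_dim (G 1) -> finite_dim (H 1).
Proof.
move=> [d [v Hv]]; exists d, (fun i => comp HH 1 (v i)) => a; split; last first.
  move=> [c ->]; apply: G_sum => // i _; apply: G_scale => //; apply: comp_G.
move=> ha.
have [g [h' [hg [hh ea]]]] := split_S HG HH bG bH gG 2 a.
have [c hc] := (Hv (comp HG 1 g)).1 (comp_G HG 1 g).
have [e he] := (bG (comp HG 0 g)).1 (comp_G HG 0 g).
exists c; rewrite -(comp_id HH ha) ea compD (hh 1%N) // addr0.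
rewrite {1}(ltd_decomp hg) big_ord_recr big_ord_recr big_ord0 /= add0r.
rewrite compD he hc (comp_homog HH 1 (base_G bH e)) /= add0r comp_sum.
by apply: eq_bigr => i _; rewrite compZ.
Qed.

Lemma key : finite_dim (G 1) -> forall n a, ltd HG n a -> ged HH n a -> a = 0.
Proof.
move=> [d [v Hv]] n.
have [N [w spw]] := ltd_fin HG gG Hv n.
pose f x := \sum_(j < n) comp HH j x.
pose g x := \sum_(i < n) comp HG i x.
have fD x y : f (x + y) = f x + f y by rewrite /f -big_split; apply: eq_bigr => j _; rewrite compD.
have gD x y : g (x + y) = g x + g y by rewrite /g -big_split; apply: eq_bigr => j _; rewrite compD.
have fZ c x : f (c *: x) = c *: f x by rewrite /f scaler_sumr; apply: eq_bigr => j _; rewrite compZ.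
have gZ c x : g (c *: x) = c *: g x by rewrite /g scaler_sumr; apply: eq_bigr => j _; rewrite compZ.
have g0 : g 0 = 0 by rewrite /g big1 // => i _; rewrite comp0.
move=> a ha hb.
apply: (@FDinj _ _ N w (ltd HG n) (fun x => g (f x)) spw) => //.
- by move=> x y /=; rewrite fD gD.
- by move=> c x /=; rewrite fZ gZ.
- move=> x _ /=; apply: ltd_sum => i _; apply: (ltd_mono (n := i.+1)).
    exact: ltn_ord.
  exact: comp_ltd.
- move=> x hx.
  have [b1 [a2 [hb1 [ha2 ex]]]] := split_S HH HG bH bG gH n x.
  have [a3 [b3 [ha3 [hb3 eb]]]] := split_S HG HH bG bH gG n b1.
  exists a3; split => //=.
  have -> : f a3 = b1.
    rewrite /f; have -> : a3 = b1 - b3 by rewrite eb addrK.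
    rewrite {2}(ltd_decomp hb1); apply: eq_bigr => j _.
    by rewrite compB (hb3 j) ?subr0.
  rewrite /g; have -> : b1 = x - a2 by rewrite ex addrK.
  rewrite {2}(ltd_decomp hx); apply: eq_bigr => j _.
  by rewrite compB (ha2 j) ?subr0.
- by rewrite /= /f big1 // => j _; rewrite hb.
Qed.

End Two2.

Lemma hlp (V : zmodType) (a b c : V) : a + b + c - a = b + c.
Proof. by apply/eqP; rewrite subr_eq (addrC (b + c)) addrA. Qed.

Section Main.
Variables (k : fieldType) (A : algType k) (Ag Bg : nat -> A -> Prop).
Hypotheses (HA : graded_decomposition Ag) (HB : graded_decomposition Bg).
Hypothesis S : forall n a, exists a1 a2, ltd HA n a1 /\ ged HB n a2 /\ a = a1 + a2.
Hypothesis D : forall n a, ltd HA n a -> ged HB n a -> a = 0.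

Lemma pr_ex n x : exists b, ltd HA n (x - b) /\ ged HB n b.
Proof. by have [a1 [a2 [h1 [h2 ->]]]] := S n x; exists a2; rewrite addrK. Qed.

Definition pr n x : A := proj1_sig (constructive_indefinite_description _ (pr_ex n x)).

Lemma pr_spec n x : ltd HA n (x - pr n x) /\ ged HB n (pr n x).
Proof. exact: proj2_sig (constructive_indefinite_description _ (pr_ex n x)). Qed.

Lemma pr_unique n x b : ltd HA n (x - b) -> ged HB n b -> pr n x = b.
Proof.
move=> h1 h2; have [p1 p2] := pr_spec n x; apply/eqP; rewrite -subr_eq0; apply/eqP.
apply: (D (n := n)); last by apply: gedB.
have -> : pr n x - b = (x - b) - (x - pr n x) by rewrite opprB [RHS]addrC addrA subrK.
exact: ltdB.
Qed.

Definition sg n x := comp HB n (pr n x).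

Lemma pr_lin n c x y : pr n (c *: x + y) = c *: pr n x + pr n y.
Proof.
have [p1 p2] := pr_spec n x; have [q1 q2] := pr_spec n y.
apply: pr_unique; last by apply: ged_lin.
have -> : c *: x + y - (c *: pr n x + pr n y) = c *: (x - pr n x) + (y - pr n y).
  by rewrite scalerBr opprD addrACA.
exact: ltd_lin.
Qed.

Lemma sg_lin n c x y : sg n (c *: x + y) = c *: sg n x + sg n y.
Proof. by rewrite /sg pr_lin comp_lin. Qed.

Lemma pr0 n : pr n 0 = 0.
Proof. by apply: pr_unique; [rewrite subr0; apply: ltd0|apply: ged0]. Qed.
Lemma sg0 n : sg n 0 = 0.
Proof. by rewrite /sg pr0 comp0. Qed.

Lemma sg_B n x : Bg n (sg n x).
Proof. exact: comp_G. Qed.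

Lemma sg_mul n m x y : Ag n x -> Ag m y -> sg (n + m) (x * y) = sg n x * sg m y.
Proof.
move=> hx hy; have [p1 p2] := pr_spec n x; have [q1 q2] := pr_spec m y.
rewrite /sg; have -> : pr (n + m) (x * y) = pr n x * pr m y.
  apply: pr_unique; last by apply: ged_mul.
  move: p1 q1; set u := x - pr n x; set w := y - pr m y => p1 q1.
  have ex : x = pr n x + u by rewrite /u addrC subrK.
  have ey : y = pr m y + w by rewrite /w addrC subrK.
  have px : ltd HA n.+1 (pr n x).
    have -> : pr n x = x - u by rewrite [in RHS]ex addrK.
    by apply: ltdB; [apply: G_ltd|apply: (ltd_mono (n := n))].
  have py : ltd HA m.+1 (pr m y).
    have -> : pr m y = y - w by rewrite [in RHS]ey addrK.
    by apply: ltdB; [apply: G_ltd|apply: (ltd_mono (n := m))].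
  clearbody u w; rewrite {1}ex {1}ey mulrDl !mulrDr hlp.
  apply: ltdD; first by have := ltd_mul px q1; rewrite addSn.
  apply: ltdD; first by have := ltd_mul p1 py; rewrite addnS.
  apply: (ltd_mono (n := (n + m).-1)); first exact: leq_pred.
  exact: ltd_mul.
by rewrite comp_mul_ged.
Qed.

Lemma sg_inj n x : Ag n x -> sg n x = 0 -> x = 0.
Proof.
move=> hx h0; have [p1 p2] := pr_spec n x.
have hp : pr n x = 0.
  apply: (D (n := n.+1)).
    have -> : pr n x = x - (x - pr n x) by rewrite opprB addrC subrK.
    apply: ltdB; first exact: G_ltd.
    by apply: (ltd_mono (n := n)).
  move=> i; rewrite ltnS leq_eqVlt => /orP [/eqP ->|hi]; first exact: h0.
  exact: p2.
move: p1; rewrite hp subr0 => p1.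
by rewrite -(comp_id HA hx); apply: p1.
Qed.

Lemma sg_surj n b : Bg n b -> exists x, Ag n x /\ sg n x = b.
Proof.
move=> hb; have [a' [b'' [h1 [h2 e]]]] := S n.+1 b.
exists (comp HA n a'); split; first exact: comp_G.
rewrite /sg; have -> : pr n (comp HA n a') = b - b''.
  apply: pr_unique.
    have -> : comp HA n a' - (b - b'') = comp HA n a' - a' by rewrite e addrK.
    move=> i hi; rewrite compB (comp_homog HA i (comp_G HA n a')).
    case: eqP => [->|ne]; first by rewrite subrr.
    rewrite h1 ?subrr //; rewrite ltn_neqAle hi andbT; apply/eqP => q; apply: ne.
    by rewrite q.
  apply: gedB; first exact: G_ged.
  by apply: (ged_mono (n := n.+1)).
by rewrite compB (comp_id HB hb) h2 ?subr0.
Qed.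


Definition bd x := proj1_sig (constructive_indefinite_description _ (ltd_ex HA x)).
Lemma bd_spec x : ltd HA (bd x) x.
Proof. exact: proj2_sig (constructive_indefinite_description _ (ltd_ex HA x)). Qed.

Definition sgm x := \sum_(i < bd x) sg i (comp HA i x).

Lemma sgm_eq M x : ltd HA M x -> sgm x = \sum_(i < M) sg i (comp HA i x).
Proof.
move=> hM; have hb := @bd_spec x; rewrite /sgm.
rewrite -(@sum_trunc _ (fun i => sg i (comp HA i x)) (bd x) (maxn (bd x) M)) ?leq_maxl //; last first.
  by move=> i hi; rewrite hb // sg0.
rewrite -(@sum_trunc _ (fun i => sg i (comp HA i x)) M (maxn (bd x) M)) ?leq_maxr //.
by move=> i hi; rewrite hM // sg0.
Qed.

Lemma sgm_hom n x : Ag n x -> sgm x = sg n x.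
Proof.
move=> hx; rewrite (sgm_eq (G_ltd HA hx)) big_ord_recr /= (comp_id HA hx) big1 ?add0r //.
by move=> i _; rewrite (G_ged HA hx) ?sg0.
Qed.

Lemma sgm_lin c x y : sgm (c *: x + y) = c *: sgm x + sgm y.
Proof.
set M := maxn (bd x) (bd y).
have hx : ltd HA M x by apply: (ltd_mono (n := bd x)); [apply: leq_maxl|apply: bd_spec].
have hy : ltd HA M y by apply: (ltd_mono (n := bd y)); [apply: leq_maxr|apply: bd_spec].
rewrite (sgm_eq (ltd_lin c hx hy)) (sgm_eq hx) (sgm_eq hy) scaler_sumr -big_split.
by apply: eq_bigr => i _; rewrite comp_lin sg_lin.
Qed.

Lemma sgmD x y : sgm (x + y) = sgm x + sgm y.
Proof. by have := sgm_lin 1 x y; rewrite !scale1r. Qed.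
Lemma sgm0 : sgm 0 = 0.
Proof. by rewrite (sgm_eq (@ltd0 _ _ _ HA 0%N)) big_ord0. Qed.
Lemma sgmZ c x : sgm (c *: x) = c *: sgm x.
Proof. by rewrite -[c *: x]addr0 sgm_lin sgm0 addr0. Qed.
Lemma sgm_sum M (F : 'I_M -> A) : sgm (\sum_(i < M) F i) = \sum_(i < M) sgm (F i).
Proof. exact: (big_morph sgm sgmD sgm0). Qed.

Lemma sgm_mul x y : sgm (x * y) = sgm x * sgm y.
Proof.
set M := maxn (bd x) (bd y).
have hx : ltd HA M x by apply: (ltd_mono (n := bd x)); [apply: leq_maxl|apply: bd_spec].
have hy : ltd HA M y by apply: (ltd_mono (n := bd y)); [apply: leq_maxr|apply: bd_spec].
have sx : sgm x = \sum_(i < M) sgm (comp HA i x) by rewrite {1}(ltd_decomp hx) sgm_sum.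
have sy : sgm y = \sum_(i < M) sgm (comp HA i y) by rewrite {1}(ltd_decomp hy) sgm_sum.
rewrite sx sy [in LHS](ltd_decomp hx) [in LHS](ltd_decomp hy) mulr_suml sgm_sum mulr_suml.
apply: eq_bigr => i _; rewrite mulr_sumr sgm_sum mulr_sumr; apply: eq_bigr => j _.
rewrite (sgm_hom (G_mul HA (comp_G HA i x) (comp_G HA j y))).
rewrite (sgm_hom (comp_G HA i x)) (sgm_hom (comp_G HA j y)).
exact: sg_mul (comp_G HA i x) (comp_G HA j y).
Qed.

Lemma sgm1 : sgm 1 = 1.
Proof.
rewrite (sgm_hom (G_1 HA)) /sg.
have -> : pr 0 1 = 1 by apply: pr_unique; [rewrite subrr; apply: ltd0|].
by rewrite (comp_id HB (G_1 HB)).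
Qed.

Lemma sgm_comp n x : (n < bd x)%N -> comp HB n (sgm x) = sg n (comp HA n x).
Proof.
move=> hn; rewrite /sgm comp_sum (bigD1 (Ordinal hn)) //= (comp_id HB (sg_B _ _)).
rewrite big1 ?addr0 // => j ne; rewrite (comp_homog HB n (sg_B _ _)) ifN //.
apply: contra ne => /eqP e; apply/eqP; apply: val_inj; by rewrite /= e.
Qed.

Lemma sgm_inj0 x : sgm x = 0 -> x = 0.
Proof.
move=> h0; rewrite (ltd_decomp (@bd_spec x)); apply: big1 => i _.
apply: (sg_inj (comp_G HA i x)); rewrite -sgm_comp //.
by rewrite h0 comp0.
Qed.

Lemma sgm_surj b : exists x, sgm x = b.
Proof.
have [M hM] := ltd_ex HB b.
suff : exists x, sgm x = \sum_(i < M) comp HB i b by rewrite -(ltd_decomp hM).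
elim: M {hM} => [|M [x hx]]; first by exists 0; rewrite sgm0 big_ord0.
have [z [hz ez]] := sg_surj (comp_G HB M b).
by exists (x + z); rewrite sgmD hx (sgm_hom hz) ez big_ord_recr.
Qed.

Lemma sgm_aut : is_alg_aut sgm.
Proof.
split; [exact: sgmD|exact: sgmZ|exact: sgm_mul|exact: sgm1|].
pose g b := proj1_sig (constructive_indefinite_description _ (sgm_surj b)).
have hg b : sgm (g b) = b := proj2_sig (constructive_indefinite_description _ (sgm_surj b)).
exists g => // x; apply/eqP; rewrite -subr_eq0; apply/eqP; apply: sgm_inj0.
by rewrite sgmD -scaleN1r sgmZ scaleN1r hg subrr.
Qed.

End Main.

Theorem corollary3 (k : fieldType) (A : algType k)
    (Ag Bg : nat -> A -> Prop) :
  graded_decomposition Ag -> graded_decomposition Bg ->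
  is_base_field (Ag 0%N) -> is_base_field (Bg 0%N) ->
  generates (Ag 1%N) -> generates (Bg 1%N) ->
  finite_dim (Ag 1%N) \/ finite_dim (Bg 1%N) ->
  (forall phi : A -> A, is_alg_aut phi -> is_graded_map Ag phi) ->
  forall (i : nat) (x : A), Ag i x <-> Bg i x.
Proof.
move=> HA HB bA bB gA gB fin aut.
have fA : finite_dim (Ag 1%N).
  by case: fin => // fB; apply: (fin_transfer HB HA bB bA gB fB).
have S := split_S HA HB bA bB gA.
have D : forall n a, ltd HA n a -> ged HB n a -> a = 0 by apply: key...
have gr := aut _ (sgm_aut S D).
move=> i x; split => hx.
  have [x0 [hx0 <-]] := (gr i).2 x hx.
  by rewrite (sgm_hom S D hx0); apply: sg_B.
have [x0 [hx0 <-]] := sg_surj S D hx.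
by rewrite -(sgm_hom S D hx0); apply: (gr i).1.
Qed.
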